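(* Let $n,k$ be positive integers and let $Z$ be the graph with vertex set $\{z_{i,j}:1\le i\le k,\ 1\le j\le n\}$ ($k$ columns indexed by $i$, $n$ rows indexed by $j$) where, for $i<i'$, $z_{i,j}z_{i',j'}$ is an edge iff (1) $i$ is odd, $i'=i+1$ and $j>j'$; or (2) $i$ is even, $i'=i+1$ and $j\le j'$; or (3) $i$ is even, $i'$ is odd and $i'\ge i+3$. Then $Z$ is a $k$-letter graph.
   Context: Let $A$ be an alphabet with $k$ letters. A $k$-letter graph is a graph (up to isomorphism) defined by a finite word $a_1a_2\cdots a_m$ over $A$ together with a set $S\subseteq A\times A$: its vertex set is $\{1,\dots,m\}$ and its edge set is $\{pq: p<q,\ (a_p,a_q)\in S\}$. *)

(* Defs.v *)
From mathcomp Require Import all_boot.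
Set Implicit Arguments. Unset Strict Implicit. Unset Printing Implicit Defensive.

(* Letter graph on vertex set {0,...,m-1} (positions 1..m shifted by one),
   given a word w : 'I_m -> 'I_k over the alphabet 'I_k and S ⊆ A×A as a rel:
   pq is an edge iff p < q and (w p, w q) ∈ S. *)
Definition letter_adj (k m : nat) (w : 'I_m -> 'I_k) (S : rel 'I_k) : rel 'I_m :=
  fun p q => ((p < q)%N && S (w p) (w q)) || ((q < p)%N && S (w q) (w p)).

Definition is_letter_graph (k : nat) (V : finType) (e : rel V) : Prop :=
  exists (m : nat) (w : 'I_m -> 'I_k) (S : rel 'I_k) (f : V -> 'I_m),
    bijective f /\ forall x y, e x y = letter_adj w S (f x) (f y).

Definition Z_cond (i j i' j' : nat) : bool :=
  [|| [&& odd i, i' == i.+1 & j' < j],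
      [&& ~~ odd i, i' == i.+1 & j <= j'] |
      [&& ~~ odd i, odd i' & i + 3 <= i'] ].

(* Vertex (i, j) : 'I_k * 'I_n stands for z_{i+1, j+1}. *)
Definition Z_adj (k n : nat) : rel ('I_k * 'I_n) :=
  fun x y =>
    let i := (val x.1).+1 in let j := (val x.2).+1 in
    let i' := (val y.1).+1 in let j' := (val y.2).+1 in
    if i < i' then Z_cond i j i' j'
    else if i' < i then Z_cond i' j' i j
    else false.

(* Main.v *)
Require Import Defs.
From mathcomp Require Import all_boot.
From mathcomp Require Import zify.

Definition Sl (a b : nat) : bool :=
  [|| odd a && (b == a.+1), ~~ odd b && (a == b.+1),
      [&& odd a, ~~ odd b & a + 3 <= b] | [&& odd b, ~~ odd a & b + 3 <= a]].

Lemma keyP (k n r c : nat) (hc : c < k) (hr : r < n) : r * k + c < n * k.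
Proof. nia. Qed.

Lemma ltkey (k r c r' c' : nat) (hc : c < k) (hc' : c' < k) :
  (r * k + c < r' * k + c') = (r < r') || (r == r') && (c < c').
Proof.
case: (ltngtP r r') => h /=.
- apply/idP; nia.
- apply/negbTE; rewrite -leqNgt; nia.
- subst; by rewrite ltn_add2l.
Qed.

Theorem lemma15 (n k : nat) (hn : 0 < n) (hk : 0 < k) :
  is_letter_graph k (@Z_adj k n).
Proof.
pose f (x : 'I_k * 'I_n) : 'I_(n * k) := Ordinal (@keyP k n x.2 x.1 (ltn_ord x.1) (ltn_ord x.2)).
have hdk p : p < n * k -> p %/ k < n by move=> hp; rewrite ltn_divLR.
have hmk p : p %% k < k by rewrite ltn_mod.
pose g (p : 'I_(n * k)) : 'I_k * 'I_n := (Ordinal (hmk p), Ordinal (hdk _ (ltn_ord p))).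
exists (n * k), (fun p => Ordinal (hmk p)), (fun a b => Sl (val a) (val b)), f.
split.
  exists g.
    move=> [c r]; apply/eqP; rewrite /g /f xpair_eqE; apply/andP; split; apply/eqP/val_inj => /=.
      by rewrite modnMDl modn_small.
    by rewrite divnMDl // divn_small // addn0.
  move=> p; apply/val_inj => /=; by rewrite -divn_eq.
move=> [c r] [c' r']; rewrite /Z_adj /letter_adj /=.
have hc := ltn_ord c; have hc' := ltn_ord c'.
rewrite !modnMDl !modn_small // !ltkey // !ltnS.
move: (val c) (val c') (val r) (val r') hc hc' => a b u v ha hb.
rewrite /Sl /Z_cond !oddS.
case: (ltngtP a b) => hab;
  case oa: (odd a); case ob: (odd b) => /=; lia.
Qed.
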